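(* Let $m=(i,k,\nu)$ with $i\in\{1,\ldots,N\}$, $k\in\{1,\ldots,n\}$, $\nu\in\{1,2\}$, and let $r>0$. Write $\psi_i^{-1}(\leq r)=\{p\in\mathbb{R}^{nN}\mid\psi_i(p)\leq r\}$. (a) The function $h_\nu\circ\psi_i$ is of class $C^1$, and (i) $h_\nu\circ\psi_i$ is bounded by a multiple of $\psi_i$ on $\psi_i^{-1}(\leq r)$; (ii) $\nabla(h_\nu\circ\psi_i)$ is bounded by a multiple of $\psi_i^{1/2}$ on $\psi_i^{-1}(\leq r)$. (b) The Lie derivative $X_m\psi$ is of class $C^2$, and (i) $X_m\psi$ is bounded by a multiple of $\psi_i^{3/2}$ on $\psi_i^{-1}(\leq r)$; (ii) $\nabla(X_m\psi)$ is bounded by a multiple of $\psi_i$ on $\psi_i^{-1}(\leq r)$; (iii) $\mathrm{D}^2(X_m\psi)$ is bounded by a multiple of $\psi_i^{1/2}$ on $\psi_i^{-1}(\leq r)$.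
   Context: $G=(V,E)$ is an undirected graph with $V=\{1,\ldots,N\}$ and nonempty edge set $E$ of two-element subsets (edges $ij$); $d_{ij}\geq0$ for $ij\in E$. For $p=(p_1,\ldots,p_N)\in\mathbb{R}^{nN}$: $\psi_i(p)=\frac14\sum_{j:\,ij\in E}(\|p_j-p_i\|^2-d_{ij}^2)^2$ and $\psi(p)=\frac14\sum_{ij\in E}(\|p_j-p_i\|^2-d_{ij}^2)^2$. For each $i$, $b_{i,1},\ldots,b_{i,n}$ is an orthonormal basis of $\mathbb{R}^n$; $B_{i,k}:\mathbb{R}^{nN}\to\mathbb{R}^{nN}$ is the constant vector field whose $i$-th block in $\mathbb{R}^n$ is $b_{i,k}$ and other blocks are $0$. $X_m(p):=h_\nu(\psi_i(p))B_{i,k}(p)$ for $m=(i,k,\nu)$, and $X_m\psi(p)=\mathrm{D}\psi(p)X_m(p)$ is the Lie derivative. The functions $h_1,h_2:\mathbb{R}\to\mathbb{R}$ satisfy, for $\nu=1,2$: (i) $h_\nu(y)=0$ for $y\leq 0$; (ii) $h_\nu$ is bounded and of class $C^2$ on $(0,\infty)$; (iii) $h_\nu(y)/y$ remains bounded as $y\downarrow 0$; (iv) $h_\nu'(y)$ remains bounded as $y\downarrow0$; (v) $h_\nu''(y)\,y$ remains bounded as $y\downarrow 0$; (vi) there exist $r',c'>0$ with $h_2'(y)h_1(y)-h_1'(y)h_2(y)\leq -c'y$ for all $y\in(0,r']$. Terminology: for a nonnegative function $b$ and a set $W$, a function $f$ is bounded by a multiple of $b$ on $W$ if there is $c>0$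 with $|f(x)|\leq c\,b(x)$ for all $x\in W$; a vector field $X$ if $\|X(x)\|\leq c\,b(x)$; a bilinear-form-valued map $A$ if $|A(x)(v,w)|\leq c\,b(x)\|v\|\|w\|$ for all $x\in W$ and all $v,w$. *)

(* Defs.v *)
From HB Require Import structures.
From mathcomp Require Import all_boot all_order all_algebra.
From mathcomp Require Import all_classical all_reals all_analysis.
Set Implicit Arguments. Unset Strict Implicit. Unset Printing Implicit Defensive.
Import Order.TTheory GRing.Theory Num.Theory.
Import numFieldNormedType.Exports.
Local Open Scope ring_scope.
Local Open Scope classical_set_scope.

(* Points p = (p_1,...,p_N) of R^{nN} are N x n matrices: row i is p_i. *)
Notation config R N n := 'M[R]_(N, n).

Section Defs.
Variables (R : realType) (N n : nat).

Definition sqdist (p : config R N n) (i j : 'I_N) : R :=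
  \sum_(l < n) (p j l - p i l) ^+ 2.

Definition psi_i (E : rel 'I_N) (d : 'I_N -> 'I_N -> R) (i : 'I_N)
    (p : config R N n) : R :=
  4^-1 * \sum_(j < N | E i j) (sqdist p i j - d i j ^+ 2) ^+ 2.

Definition psi (E : rel 'I_N) (d : 'I_N -> 'I_N -> R) (p : config R N n) : R :=
  4^-1 * \sum_(i < N) \sum_(j < N | (i < j)%N && E i j)
           (sqdist p i j - d i j ^+ 2) ^+ 2.

Definition Bfield (i : 'I_N) (b : 'rV[R]_n) : config R N n :=
  \matrix_(j, l) (if j == i then b 0 l else 0).

Definition Xpsi (E : rel 'I_N) (d : 'I_N -> 'I_N -> R) (h : R -> R)
    (i : 'I_N) (b : 'rV[R]_n) (p : config R N n) : R :=
  'd (psi E d) p (h (psi_i E d i p) *: Bfield i b).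
End Defs.

Section Smooth.
Variables (R : realType) (V : normedModType R).

(* class C^1 : differentiable everywhere with continuous differential
   (continuity of x |-> Df(x) tested on each direction; V is finite-dim.) *)
Definition C1 (f : V -> R) : Prop :=
  (forall x, differentiable f x) /\
  (forall v, continuous (fun x => 'd f x v)).

Definition D2 (f : V -> R) (x v w : V) : R := 'd (fun y => 'd f y v) x w.

Definition C2 (f : V -> R) : Prop :=
  (forall x, differentiable f x) /\
  (forall v x, differentiable (fun y => 'd f y v) x) /\
  (forall v w, continuous (fun x => D2 f x v w)).

Definition fun_bdd_mult (f : V -> R) (b : V -> R) (W : set V) : Prop :=
  exists2 c : R, 0 < c & forall x, W x -> `|f x| <= c * b x.
Definition diff_bdd_mult (f : V -> R) (b : V -> R) (W : set V) : Prop :=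
  exists2 c : R, 0 < c & forall x, W x -> forall v, `|'d f x v| <= c * b x * `|v|.
Definition D2_bdd_mult (f : V -> R) (b : V -> R) (W : set V) : Prop :=
  exists2 c : R, 0 < c & forall x, W x -> forall v w,
    `|D2 f x v w| <= c * b x * `|v| * `|w|.
End Smooth.

Section Hyp.
Variable (R : realType).
Definition h_hyp (h : R -> R) : Prop :=
  [/\ (forall y, y <= 0 -> h y = 0),
      (exists M, forall y, `|h y| <= M) /\
      (forall y, 0 < y -> [/\ derivable h y 1, derivable (derive1 h) y 1
                            & {for y, continuous (derive1n 2 h)}]),
      (exists2 d : R, 0 < d & exists M, forall y, 0 < y < d -> `|h y / y| <= M),
      (exists2 d : R, 0 < d & exists M, forall y, 0 < y < d -> `|(derive1 h) y| <= M)
    & (exists2 d : R, 0 < d & exists M, forall y, 0 < y < d -> `|(derive1n 2 h) y * y| <= M)].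

Definition h_hyp6 (h1 h2 : R -> R) : Prop :=
  exists2 r' : R, 0 < r' & exists2 c' : R, 0 < c' &
    forall y, 0 < y <= r' -> (derive1 h2) y * h1 y - (derive1 h1) y * h2 y <= - (c' * y).
End Hyp.

(* Main.v *)
Require Import Defs.
From HB Require Import structures.
From mathcomp Require Import all_boot all_order all_algebra.
From mathcomp Require Import all_classical all_reals all_analysis.
From mathcomp Require Import ring lra.
Import Order.TTheory GRing.Theory Num.Theory.
Import numFieldNormedType.Exports.
Local Open Scope ring_scope.
Local Open Scope classical_set_scope.

Section Calc.
Context {R : realType} {V : normedModType R}.

Definition HD (f : V -> R) (x : V) (df : V -> R) :=
  differentiable f x /\ ('d f x : V -> R) = df.

Lemma HD_ext {f g x df dg} : HD f x df -> (forall p, f p = g p) -> (forall v, df v = dg v) ->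
  HD g x dg.
Proof.
move=> H fg dfg; move: H; have -> : f = g by apply/funext.
by have -> : df = dg by apply/funext.
Qed.

Lemma HD_cst c x : HD (fun _ => c) x (fun _ => 0).
Proof. by split; [exact: differentiable_cst | exact: diff_cst]. Qed.

Lemma HD_add {f g x df dg} : HD f x df -> HD g x dg ->
  HD (fun p => f p + g p) x (fun v => df v + dg v).
Proof.
move=> [fd fD] [gd gD]; split; first exact: differentiableD.
by rewrite (diffD fd gd) fD gD.
Qed.

Lemma HD_mul {f g x df dg} : HD f x df -> HD g x dg ->
  HD (fun p => f p * g p) x (fun v => f x * dg v + g x * df v).
Proof.
move=> [fd fD] [gd gD]; split; first exact: differentiableM.
by rewrite (diffM fd gd) fD gD.
Qed.

Lemma HD_sum {I : eqType} {s : seq I} {P : pred I} {F dF : I -> V -> R} {x} :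
  (forall j, P j -> HD (F j) x (dF j)) ->
  HD (fun p => \sum_(j <- s | P j) F j p) x (fun v => \sum_(j <- s | P j) dF j v).
Proof.
move=> H; elim: s => [|a s IH].
  by apply: (HD_ext (HD_cst 0 x)) => // p; rewrite big_nil.
case Pa: (P a).
  apply: (HD_ext (HD_add (H a Pa) IH)) => [p|v]; by rewrite big_cons Pa.
by apply: (HD_ext IH) => [p|v]; rewrite big_cons Pa.
Qed.

Lemma HD_comp (h : R -> R) {f x df} : derivable h (f x) 1 -> HD f x df ->
  HD (fun p => h (f p)) x (fun v => derive1 h (f x) * df v).
Proof.
move=> hd [fd fD]; have hd' := hd; move/derivable1_diffP: hd' => hd'.
split; first exact: (differentiable_comp fd hd').
rewrite (diff_comp fd hd') (deriv1E hd) fD; apply/funext => v /=.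
by rewrite mulrC.
Qed.

Lemma HD_zero (f g : V -> R) x (M : R) : HD g x (fun _ => 0) -> g x = 0 ->
  f x = 0 -> (\forall q \near x, `|f q| <= M * `|g q|) ->
  HD f x (fun _ => 0).
Proof.
move=> [dg Dg] gx0 fx0 fnear.
have go := diff_locally dg; rewrite Dg gx0 in go; move/eqaddoP: go => go.
have Hf : f \o shift x = cst (f x) + \0 +o_ 0 id.
  apply/eqaddoP => e e0.
  have M1 : 0 < `|M| + 1 by rewrite ltr_wpDl.
  have gnear := go (e / (`|M| + 1)) (divr_gt0 e0 M1).
  move: fnear; rewrite (near_shift 0 x) => fnear.
  near=> h.
  have A : `|f (h + (x - 0))| <= M * `|g (h + (x - 0))| by near: h.
  have B : `|(g \o shift x - (cst 0 + (fun=> 0))) h| <= e / (`|M| + 1) * `|h|.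
    by near: h.
  move: A B; rewrite /= fx0 !subr0 addr0 !fctE subr0 => A B.
  rewrite subr0; apply: (le_trans A); apply: (le_trans (ler_wpM2r (normr_ge0 _) (ler_norm M))).
  rewrite (le_trans (ler_wpM2l (normr_ge0 _) B)) //.
  rewrite mulrA ler_wpM2r // mulrCA ler_piMr ?ltW // ltr_pdivrMr // mul1r ltrDl ltr01 //.
have D0 : ('d f x : V -> R) = 0.
  by apply: diff_unique; [exact: cst_continuous | exact: Hf].
split; last by rewrite D0.
apply/diff_locallyP; rewrite D0; split => //.
exact: cst_continuous.
Unshelve. all: by end_near.
Qed.

Lemma HD_scal c {f x df} : HD f x df ->
  HD (fun p => c * f p) x (fun v => c * df v).
Proof.
move=> H; apply: (HD_ext (HD_mul (HD_cst c x) H)) => // v.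
by rewrite mulr0 addr0.
Qed.

Lemma HD_sub {f g x df dg} : HD f x df -> HD g x dg ->
  HD (fun p => f p - g p) x (fun v => df v - dg v).
Proof.
move=> Hf Hg; apply: (HD_ext (HD_add Hf (HD_scal (-1) Hg))) => v;
by rewrite mulN1r.
Qed.

Lemma HD_diff {f x df} : HD f x df -> differentiable f x.
Proof. by case. Qed.

Lemma HD_val {f x df} v : HD f x df -> 'd f x v = df v.
Proof. by case=> _ ->. Qed.

Lemma HD_cont {f x df} : HD f x df -> {for x, continuous f}.
Proof. by case=> H _; exact: differentiable_continuous. Qed.

End Calc.

Lemma HD_coord {R : realType} {N n : nat} (a : 'I_N) (l : 'I_n) (x : 'M[R]_(N, n)) :
  HD (fun p : 'M[R]_(N, n) => p a l) x (fun v => v a l).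
Proof.
pose g := fun p : 'M[R]_(N, n) => p a l.
have glin : linear g by move=> c u w; rewrite /g !mxE.
pose gL : {linear 'M[R]_(N, n) -> R} := HB.pack g (GRing.isLinear.Build _ _ _ _ _ glin).
have gc : continuous gL by apply: coord_continuous.
split; first exact: differentiable_coord.
exact: (diff_lin x gc).
Qed.

Section Bnd.
Context {R : realType} {X : Type} (W : set X).
Definition Bnd (F g : X -> R) :=
  exists C, 0 <= C /\ forall x, W x -> `|F x| <= C * g x.

Lemma Bnd_add {F G g} : Bnd F g -> Bnd G g -> Bnd (fun x => F x + G x) g.
Proof.
move=> [C1 [C10 H1]] [C2 [C20 H2]]; exists (C1 + C2); split; first exact: addr_ge0.
move=> x Wx; rewrite mulrDl (le_trans (ler_normD _ _)) //.
by rewrite lerD ?H1 ?H2.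
Qed.

Lemma Bnd_mul {F G f g} : Bnd F f -> Bnd G g -> Bnd (fun x => F x * G x) (fun x => f x * g x).
Proof.
move=> [C1 [C10 H1]] [C2 [C20 H2]]; exists (C1 * C2); split; first exact: mulr_ge0.
move=> x Wx; rewrite normrM mulrACA.
by apply: ler_pM; rewrite ?normr_ge0 ?H1 ?H2.
Qed.

Lemma Bnd_le {F g g' K} : 0 <= K -> (forall x, W x -> g x <= K * g' x) -> Bnd F g -> Bnd F g'.
Proof.
move=> K0 Hg [C [C0 H]]; exists (C * K); split; first exact: mulr_ge0.
move=> x Wx; rewrite (le_trans (H x Wx)) // -mulrA ler_wpM2l // ?Hg //.
Qed.

Lemma Bnd_eqg {F g g'} : (forall x, W x -> g x = g' x) -> Bnd F g -> Bnd F g'.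
Proof.
by move=> Hg; apply: (@Bnd_le F g g' 1) => // x Wx; rewrite mul1r Hg.
Qed.

Lemma Bnd_ext {F F' g} : (forall x, W x -> F x = F' x) -> Bnd F g -> Bnd F' g.
Proof.
by move=> HF [C [C0 H]]; exists C; split => // x Wx; rewrite -HF // H.
Qed.

Lemma Bnd_of F g : (forall x, W x -> `|F x| <= g x) -> Bnd F g.
Proof. by move=> H; exists 1; split => // x Wx; rewrite mul1r H. Qed.

Lemma Bnd_0 g : Bnd (fun _ => 0) g.
Proof. by exists 0; split => // x _; rewrite normr0 mul0r. Qed.

Lemma Bnd_cst c : Bnd (fun _ => c) (fun _ => 1).
Proof. by exists `|c|; split => // x _; rewrite mulr1. Qed.

Lemma Bnd_sum {I : eqType} {s : seq I} {P : pred I} {F : I -> X -> R} {g} :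
  (forall j, P j -> Bnd (F j) g) -> Bnd (fun x => \sum_(j <- s | P j) F j x) g.
Proof.
move=> H; elim: s => [|a s IH].
  by apply: (@Bnd_ext (fun _ => 0)) => [x _|]; [rewrite big_nil | exact: Bnd_0].
case Pa: (P a).
  apply: (@Bnd_ext (fun x => F a x + \sum_(j <- s | P j) F j x)).
    by move=> x _; rewrite big_cons Pa.
  exact: Bnd_add (H a Pa) IH.
by apply: (@Bnd_ext _ _ g _ IH) => x _; rewrite big_cons Pa.
Qed.

Lemma Bnd_W {F g} (W' : set X) : (forall x, W x -> W' x) ->
  (exists C, 0 <= C /\ forall x, W' x -> `|F x| <= C * g x) -> Bnd F g.
Proof. by move=> HW [C [C0 H]]; exists C; split => // x /HW /H. Qed.
End Bnd.
Arguments Bnd_add {R X W F G g}.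
Arguments Bnd_mul {R X W F G f g}.
Arguments Bnd_le {R X W F g g' K}.
Arguments Bnd_eqg {R X W F g g'}.
Arguments Bnd_ext {R X W F F' g}.
Arguments Bnd_of {R X W F g}.
Arguments Bnd_0 {R X W g}.
Arguments Bnd_cst {R X W} c.
Arguments Bnd_sum {R X W I s P F g}.


Lemma bdd_oc (R : realType) (f : R -> R) (d M r : R) : 0 < d ->
  (forall y, 0 < y < d -> `|f y| <= M) ->
  (forall y, 0 < y -> {for y, continuous f}) ->
  exists C, forall y, 0 < y <= r -> `|f y| <= C.
Proof.
move=> d0 Hd fc.
have d20 : 0 < d / 2 by rewrite divr_gt0.
have d2d : d / 2 < d by rewrite ltr_pdivrMr // ltr_pMr // ltr1n.
case: (lerP r (d / 2)) => rd.
  exists M => y /andP[y0 yr]; apply: Hd; rewrite y0 /=.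
  exact: (le_lt_trans yr (le_lt_trans rd d2d)).
have cn : {within `[d / 2, r], continuous (fun t => `|f t|)}.
  apply: continuous_in_subspaceT => y; rewrite inE /= in_itv /= => /andP[y1 _].
  apply: (@continuous_comp _ _ _ f Num.norm); first exact: fc (lt_le_trans d20 y1).
  exact: norm_continuous.
have [c _ Hc] := EVT_max (ltW rd) cn.
exists (Num.max M `|f c|) => y /andP[y0 yr].
case: (ltP y (d / 2)) => yd.
  rewrite le_max; apply/orP; left; apply: Hd; rewrite y0 /=.
  exact: lt_trans yd d2d.
rewrite le_max; apply/orP; right; apply: Hc.
by rewrite in_itv /= yd yr.
Qed.

Section Concrete.
Variables (R : realType) (N n : nat) (E : rel 'I_N) (d : 'I_N -> 'I_N -> R)
  (i : 'I_N) (B : 'M[R]_(N, n)).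
Local Notation V := 'M[R]_(N, n).
Implicit Types (p v w x : V).

Definition dl a c l p := p c l - p a l.
Definition Sb a c p v := \sum_(l < n) 2 * (dl a c l p * dl a c l v).
Definition ee a c p := sqdist p a c - d a c ^+ 2.
Definition phi p := psi_i E d i p.
Definition Dphi p v := 2^-1 * \sum_(j < N | E i j) ee i j p * Sb i j p v.
Definition D2phi p v w :=
  2^-1 * \sum_(j < N | E i j) (Sb i j p w * Sb i j p v + ee i j p * Sb i j w v).
Definition Dpsi p v := 2^-1 * \sum_(a < N) \sum_(c < N | (a < c)%N && E a c)
  ee a c p * Sb a c p v.
Definition G p := Dpsi p B.
Definition DG p v := 2^-1 * \sum_(a < N) \sum_(c < N | (a < c)%N && E a c)
  (Sb a c p v * Sb a c p B + ee a c p * Sb a c v B).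
Definition D2G p v w := 2^-1 * \sum_(a < N) \sum_(c < N | (a < c)%N && E a c)
  (Sb a c w v * Sb a c p B + Sb a c p v * Sb a c w B + Sb a c p w * Sb a c v B).

Lemma HD_dl a c l x : HD (dl a c l) x (dl a c l).
Proof. exact: HD_sub (HD_coord c l x) (HD_coord a l x). Qed.

Lemma HD_sqd a c x : HD (fun p => sqdist p a c) x (Sb a c x).
Proof.
apply: (HD_ext (HD_sum (fun l _ => HD_mul (HD_dl a c l x) (HD_dl a c l x)))).
  by move=> p; rewrite /sqdist; apply: eq_bigr => l _; rewrite /dl expr2.
by move=> v; apply: eq_bigr => l _; ring.
Qed.

Lemma HD_ee a c x : HD (ee a c) x (Sb a c x).
Proof.
apply: (HD_ext (HD_sub (HD_sqd a c x) (HD_cst (d a c ^+ 2) x))) => // v.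
by rewrite subr0.
Qed.

Lemma HD_Sv a c v x : HD (fun p => Sb a c p v) x (fun w => Sb a c w v).
Proof.
apply: (HD_ext (HD_sum (fun l _ => HD_scal 2 (HD_mul (HD_dl a c l x) (HD_cst (dl a c l v) x))))) => // w.
by apply: eq_bigr => l _; ring.
Qed.

Lemma HD_phi x : HD phi x (Dphi x).
Proof.
apply: (HD_ext (HD_scal 4^-1 (HD_sum (fun j _ => HD_mul (HD_ee i j x) (HD_ee i j x))))).
  by move=> p; rewrite /phi /psi_i; congr (_ * _); apply: eq_bigr => j _; rewrite expr2.
move=> v; rewrite /Dphi (eq_bigr (fun j => 2 * (ee i j x * Sb i j x v))).
  by rewrite -mulr_sumr mulrA; congr (_ * _); field.
by move=> j _; ring.
Qed.

Lemma HD_Dphi v x : HD (fun p => Dphi p v) x (D2phi x v).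
Proof.
apply: (HD_ext (HD_scal 2^-1 (HD_sum (fun j _ => HD_mul (HD_ee i j x) (HD_Sv i j v x))))) => // w.
rewrite /D2phi; congr (_ * _); apply: eq_bigr => j _; ring.
Qed.

Lemma HD_extd {f x df dg} : HD f x df -> (forall v, df v = dg v) -> HD f x dg.
Proof. by move=> H; apply: HD_ext H _. Qed.

Lemma HD_psi x : HD (psi E d) x (Dpsi x).
Proof.
have -> : psi E d = fun p => 4^-1 * \sum_(a < N) \sum_(c < N | (a < c)%N && E a c) (ee a c p * ee a c p).
  by apply/funext => p; rewrite /psi.
apply: HD_extd.
  apply: HD_scal; apply: HD_sum => a _; apply: HD_sum => c _; apply: HD_mul; exact: HD_ee.
move=> v; rewrite /Dpsi.
rewrite (eq_bigr (fun a : 'I_N => 2 * \sum_(c < N | (a < c)%N && E a c) (ee a c x * Sb a c x v))).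
  by rewrite -mulr_sumr mulrA; congr (_ * _); field.
move=> a _; rewrite mulr_sumr; apply: eq_bigr => c _; ring.
Qed.

Lemma HD_G x : HD G x (DG x).
Proof.
apply: (HD_ext (HD_scal 2^-1 (HD_sum (fun a _ => HD_sum (fun c _ => HD_mul (HD_ee a c x) (HD_Sv a c B x)))))) => // v.
rewrite /DG; congr (_ * _); apply: eq_bigr => a _; apply: eq_bigr => c _; ring.
Qed.

Lemma HD_DG v x : HD (fun p => DG p v) x (D2G x v).
Proof.
apply: (HD_ext (HD_scal 2^-1 (HD_sum (fun a _ => HD_sum (fun c _ =>
  HD_add (HD_mul (HD_Sv a c v x) (HD_Sv a c B x)) (HD_mul (HD_ee a c x) (HD_cst (Sb a c v B) x))))))) => // w.
rewrite /D2G; congr (_ * _); apply: eq_bigr => a _; apply: eq_bigr => c _.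
ring.
Qed.

Lemma phi_ge0 p : 0 <= phi p.
Proof.
rewrite /phi /psi_i mulr_ge0 // ?invr_ge0 ?ler0n //.
by apply: sumr_ge0 => j _; rewrite sqr_ge0.
Qed.

Lemma sqdistC p a c : sqdist p a c = sqdist p c a.
Proof. by apply: eq_bigr => l _; ring. Qed.

Lemma ee_le_phi j p : E i j -> ee i j p ^+ 2 <= 4 * phi p.
Proof.
move=> Eij; rewrite /phi /psi_i mulrA mulfV ?pnatr_eq0 // mul1r.
rewrite (bigD1 j) //= lerDl; apply: sumr_ge0 => c _; exact: sqr_ge0.
Qed.

Lemma dl_le_sqd a c l p : dl a c l p ^+ 2 <= sqdist p a c.
Proof.
rewrite /sqdist (bigD1 l) //= lerDl; apply: sumr_ge0 => c' _; exact: sqr_ge0.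
Qed.


Lemma norm_le_sq (x : R) : `|x| <= 1 + x ^+ 2.
Proof.
have -> : x ^+ 2 = `|x| ^+ 2 by rewrite -normrX ger0_norm // sqr_ge0.
have := normr_ge0 x; set y := `|x|; move=> y0; nra.
Qed.

Lemma sq_le_sqrt (x y : R) : 0 <= y -> x ^+ 2 <= 4 * y -> `|x| <= 2 * Num.sqrt y.
Proof.
move=> y0 H.
have e1 : x ^+ 2 = `|x| ^+ 2 by rewrite -normrX ger0_norm // sqr_ge0.
have e2 : 4 * y = (2 * Num.sqrt y) ^+ 2.
  by rewrite exprMn sqr_sqrtr //; congr (_ * _); rewrite expr2 -natrM.
rewrite e1 e2 in H.
have a0 := normr_ge0 x; have b0 : 0 <= 2 * Num.sqrt y by rewrite mulr_ge0 // sqrtr_ge0.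
move: H a0 b0; set a := `|x|; set b := 2 * Num.sqrt y => H a0 b0; nra.
Qed.

Lemma coord_le (x : V) a l : `|x a l| <= `|x|.
Proof.
rewrite [X in _ <= X]mx_normrE. apply/bigmax_geP; right; exists (a, l) => //.
Qed.

Variables (HEsym : symmetric E) (Hdsym : forall a c, d a c = d c a)
  (HB : forall a l, a != i -> B a l = 0).

Definition sq p := Num.sqrt (phi p).
Definition Wr (r : R) (t : V * V * V) := phi t.1.1 <= r.

Lemma sq_ge0 p : 0 <= sq p. Proof. exact: sqrtr_ge0. Qed.
Lemma sqK p : sq p ^+ 2 = phi p. Proof. exact/sqr_sqrtr/phi_ge0. Qed.
Lemma sq_le r t : Wr r t -> sq t.1.1 <= 1 + r.
Proof.
move=> Wt; apply: (le_trans (y := 1 + sq t.1.1 ^+ 2)).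
  by have := norm_le_sq (sq t.1.1); rewrite ger0_norm // sq_ge0.
by rewrite sqK lerD2l.
Qed.

Definition inc a c := (a == i) || (c == i).

Lemma ee_inc a c p : E a c -> inc a c -> ee a c p ^+ 2 <= 4 * phi p.
Proof.
move=> Eac /orP[] /eqP Hx; subst; first exact: ee_le_phi.
have -> : ee a i p = ee i a p by rewrite /ee sqdistC Hdsym.
by apply: ee_le_phi; rewrite HEsym.
Qed.

Section B.
Variable r : R.
Hypothesis Hr : 0 <= r.
Local Notation W := (Wr r).

Lemma B_ee a c : E a c -> inc a c -> Bnd W (fun t => ee a c t.1.1) (fun t => sq t.1.1).
Proof.
move=> Eac Iac; exists 2; split => // t Wt.
exact: sq_le_sqrt (phi_ge0 _) (ee_inc a c t.1.1 Eac Iac).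
Qed.

Lemma B_dlp a c l : E a c -> inc a c -> Bnd W (fun t => dl a c l t.1.1) (fun _ => 1).
Proof.
move=> Eac Iac; exists (2 + 4 * r + d a c ^+ 2); split.
  by apply: addr_ge0; [apply: addr_ge0 => //; apply: mulr_ge0 | exact: sqr_ge0].
move=> t Wt; rewrite mulr1.
apply: (le_trans (norm_le_sq _)).
have H1 := dl_le_sqd a c l t.1.1.
have H2 : sqdist t.1.1 a c = ee a c t.1.1 + d a c ^+ 2 by rewrite /ee subrK.
have H3 := norm_le_sq (ee a c t.1.1).
have H4 := ee_inc a c t.1.1 Eac Iac.
have H5 := ler_norm (ee a c t.1.1).
move: Wt; rewrite /Wr => Wt.
lra.
Qed.

Lemma B_dlv a c l (sel : V * V * V -> V) :
  Bnd W (fun t => dl a c l (sel t)) (fun t => `|sel t|).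
Proof.
exists 2; split => // t _; rewrite /dl (le_trans (ler_normB _ _)) //.
by rewrite mulr2n mulrDl mul1r lerD ?coord_le.
Qed.

Lemma B_S a c (sel : V * V * V -> V) : E a c -> inc a c ->
  Bnd W (fun t => Sb a c t.1.1 (sel t)) (fun t => `|sel t|).
Proof.
move=> Eac Iac; rewrite /Sb.
apply: (Bnd_sum (W := W) (F := (fun l t => 2 * (dl a c l t.1.1 * dl a c l (sel t))))) => l _.
apply: (Bnd_eqg (g := fun t => 1 * (1 * `|sel t|))) => [t _|]; first by rewrite !mul1r.
exact: Bnd_mul (Bnd_cst 2) (Bnd_mul (B_dlp a c l Eac Iac) (B_dlv a c l sel)).
Qed.

Lemma B_S2 a c (sel1 sel2 : V * V * V -> V) :
  Bnd W (fun t => Sb a c (sel1 t) (sel2 t)) (fun t => `|sel1 t| * `|sel2 t|).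
Proof.
rewrite /Sb.
apply: (Bnd_sum (W := W) (F := (fun l t => 2 * (dl a c l (sel1 t) * dl a c l (sel2 t))))) => l _.
apply: (Bnd_eqg (g := fun t => 1 * (`|sel1 t| * `|sel2 t|))) => [t _|]; first by rewrite !mul1r.
exact: Bnd_mul (Bnd_cst 2) (Bnd_mul (B_dlv a c l sel1) (B_dlv a c l sel2)).
Qed.

Lemma B_SB a c (sel : V * V * V -> V) :
  Bnd W (fun t => Sb a c (sel t) B) (fun t => `|sel t|).
Proof.
apply: (Bnd_le (K := `|B|)) (B_S2 a c sel (fun _ => B)) => // t _.
by rewrite mulrC.
Qed.

Lemma B_SpB a c : E a c -> inc a c -> Bnd W (fun t => Sb a c t.1.1 B) (fun _ => 1).
Proof.
move=> Eac Iac; apply: (Bnd_le (K := `|B|)) (B_S a c (fun _ => B) Eac Iac) => // t _.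
by rewrite mulr1.
Qed.
End B.

Lemma SB0 a c p : ~~ inc a c -> Sb a c p B = 0.
Proof.
rewrite /inc negb_or => /andP[ai ci]; rewrite /Sb big1 // => l _.
by rewrite /dl !HB // subrr !mulr0.
Qed.



Section B2.
Variable r : R.
Hypothesis Hr : 0 <= r.
Local Notation W := (Wr r).
Let incii j : inc i j. Proof. by rewrite /inc eqxx. Qed.

Lemma P1 (sel : V * V * V -> V) :
  Bnd W (fun t => Dphi t.1.1 (sel t)) (fun t => sq t.1.1 * `|sel t|).
Proof.
rewrite /Dphi; apply: (Bnd_eqg (g := fun t => 1 * (sq t.1.1 * `|sel t|))) => [t _|].
  by rewrite mul1r.
apply: Bnd_mul; first exact: Bnd_cst.
apply: Bnd_sum => j Eij; apply: Bnd_mul; [exact: B_ee | exact: B_S].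
Qed.

Lemma P5 (sel1 sel2 : V * V * V -> V) :
  Bnd W (fun t => D2phi t.1.1 (sel1 t) (sel2 t)) (fun t => `|sel1 t| * `|sel2 t|).
Proof.
rewrite /D2phi; apply: (Bnd_eqg (g := fun t => 1 * (`|sel1 t| * `|sel2 t|))) => [t _|].
  by rewrite mul1r.
apply: Bnd_mul; first exact: Bnd_cst.
apply: Bnd_sum => j Eij; apply: Bnd_add.
  apply: (Bnd_le (K := 1)); [by [] | move=> t _ /= |
    by apply: Bnd_mul; [exact: B_S | exact: B_S]].
  by rewrite mul1r mulrC.
apply: (Bnd_le (K := 1 + r)); [by apply: addr_ge0 | move=> t Wt /= |
  by apply: Bnd_mul; [exact: B_ee | exact: B_S2]].
cbv beta; have := mulr_ge0 (normr_ge0 (sel1 t)) (normr_ge0 (sel2 t)); move: (@sq_le r t Wt) (sq_ge0 t.1.1) => /= ? ? ?; nra.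
Qed.

Lemma P2 : Bnd W (fun t => G t.1.1) (fun t => sq t.1.1).
Proof.
rewrite /G /Dpsi; apply: (Bnd_eqg (g := fun t => 1 * sq t.1.1)) => [t _|].
  by rewrite mul1r.
apply: Bnd_mul; first exact: Bnd_cst.
apply: Bnd_sum => a _; apply: Bnd_sum => c /andP[_ Eac].
case Iac: (inc a c).
  apply: (Bnd_eqg (g := fun t => sq t.1.1 * 1)) => [t _|]; first by rewrite mulr1.
  by apply: Bnd_mul; [exact: B_ee | exact: B_SpB].
apply: (Bnd_ext (F := fun _ => 0)) => [t _|]; last exact: Bnd_0.
by rewrite SB0 ?Iac // mulr0.
Qed.

Lemma P3 (sel : V * V * V -> V) :
  Bnd W (fun t => DG t.1.1 (sel t)) (fun t => `|sel t|).
Proof.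
rewrite /DG; apply: (Bnd_eqg (g := fun t => 1 * `|sel t|)) => [t _|].
  by rewrite mul1r.
apply: Bnd_mul; first exact: Bnd_cst.
apply: Bnd_sum => a _; apply: Bnd_sum => c /andP[_ Eac].
case Iac: (inc a c).
  apply: Bnd_add.
    apply: (Bnd_eqg (g := fun t => `|sel t| * 1)) => [t _|]; first by rewrite mulr1.
    by apply: Bnd_mul; [exact: B_S | exact: B_SpB].
  apply: (Bnd_le (K := 1 + r)); [by apply: addr_ge0 | move=> t Wt /= |
    by apply: Bnd_mul; [exact: B_ee | exact: B_SB]].
  by rewrite ler_wpM2r //; exact: sq_le.
apply: (Bnd_ext (F := fun _ => 0)) => [t _|]; last exact: Bnd_0.
by rewrite !SB0 ?Iac // !mulr0 addr0.
Qed.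

Lemma P4 (sel1 sel2 : V * V * V -> V) :
  Bnd W (fun t => D2G t.1.1 (sel1 t) (sel2 t)) (fun t => `|sel1 t| * `|sel2 t|).
Proof.
rewrite /D2G; apply: (Bnd_eqg (g := fun t => 1 * (`|sel1 t| * `|sel2 t|))) => [t _|].
  by rewrite mul1r.
apply: Bnd_mul; first exact: Bnd_cst.
apply: Bnd_sum => a _; apply: Bnd_sum => c /andP[_ Eac].
case Iac: (inc a c).
  apply: Bnd_add; first apply: Bnd_add.
  - apply: (Bnd_eqg (g := fun t => (`|sel2 t| * `|sel1 t|) * 1)) => [t _|].
      by rewrite mulr1 mulrC.
    by apply: Bnd_mul; [exact: B_S2 | exact: B_SpB].
  - by apply: Bnd_mul; [exact: B_S | exact: B_SB].
  - apply: (Bnd_eqg (g := fun t => `|sel2 t| * `|sel1 t|)) => [t _|].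
      by rewrite mulrC.
    by apply: Bnd_mul; [exact: B_S | exact: B_SB].
apply: (Bnd_ext (F := fun _ => 0)) => [t _|]; last exact: Bnd_0.
by rewrite !SB0 ?Iac // !mulr0 !addr0.
Qed.
End B2.


Lemma Bnd_sq0 r (F : V * V * V -> R) g t : Bnd (Wr r) F (fun t => sq t.1.1 * g t) ->
  Wr r t -> phi t.1.1 = 0 -> F t = 0.
Proof.
move=> [C [C0 H]] Wt p0; have := H t Wt; rewrite /sq p0 sqrtr0 mul0r mulr0.
by rewrite normr_le0 => /eqP.
Qed.

Lemma W1 p : phi p = 0 -> forall v w, Wr 1 (p, v, w).
Proof. by move=> p0 v w; rewrite /Wr /= p0. Qed.

Lemma phi0_Dphi p v : phi p = 0 -> Dphi p v = 0.
Proof.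
move=> p0; apply: (@Bnd_sq0 1 (fun t => Dphi t.1.1 t.1.2) (fun t => `|t.1.2|) (p, v, v)) => //.
  exact: (@P1 1 ler01 (fun t => t.1.2)).
exact: W1.
Qed.

Lemma phi0_G p : phi p = 0 -> G p = 0.
Proof.
move=> p0; apply: (@Bnd_sq0 1 (fun t => G t.1.1) (fun _ => 1) (p, p, p)) => //.
  by apply: (Bnd_eqg _ (@P2 1 ler01)) => t _; rewrite mulr1.
exact: W1.
Qed.

Lemma cont_sq x : {for x, continuous sq}.
Proof.
apply: (@continuous_comp _ _ _ phi Num.sqrt); first exact: HD_cont (HD_phi x).
exact: sqrt_continuous.
Qed.

Lemma cont0 (F : V -> R) x C : phi x = 0 -> F x = 0 ->
  (forall y, phi y <= 1 -> `|F y| <= C * sq y) -> {for x, continuous F}.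
Proof.
move=> p0 F0 HF; apply/(@cvgrPdist_lt _ _ _ _ (nbhs_filter x)) => e e0; rewrite F0.
have C1 : 0 < `|C| + 1 by rewrite ltr_wpDl.
have sx0 : sq x = 0 by rewrite /sq p0 sqrtr0.
have n1 := @cvgr_dist_lt _ _ _ (nbhs x) (nbhs_filter x) _ _ (cont_sq x) _ (divr_gt0 e0 C1).
have n2 := @cvgr_lt _ _ (nbhs x) (nbhs_filter x) _ _ (HD_cont (HD_phi x)) 1; rewrite p0 in n2.
have {}n2 := n2 ltr01.
near=> t.
have A : phi t < 1 by near: t.
have B' : `|sq x - sq t| < e / (`|C| + 1) by near: t.
rewrite sx0 sub0r normrN ger0_norm ?sq_ge0 // in B'.
rewrite sub0r normrN (le_lt_trans (HF t (ltW A))) //.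
apply: (le_lt_trans (y := `|C| * sq t)); first by rewrite ler_wpM2r ?sq_ge0 ?ler_norm.
apply: (le_lt_trans (y := `|C| * (e / (`|C| + 1)))); first by rewrite ler_wpM2l // ltW.
by rewrite mulrCA gtr_pMr // ltr_pdivrMr // mul1r ltrDl.
Unshelve. all: by end_near.
Qed.

Section H.
Variables (h : R -> R) (Hh : h_hyp h).

Let h0 : forall y, y <= 0 -> h y = 0.
Proof. by case: Hh. Qed.
Let hreg y : 0 < y -> [/\ derivable h y 1, derivable (derive1 h) y 1
                            & {for y, continuous (derive1n 2 h)}].
Proof. by case: Hh => _ [_ H] _ _ _; apply: H. Qed.
Let hder y : 0 < y -> derivable h y 1. Proof. by case/hreg. Qed.
Let h1der y : 0 < y -> derivable (derive1 h) y 1. Proof. by case/hreg. Qed.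
Let h2cont y : 0 < y -> {for y, continuous (derive1n 2 h)}. Proof. by case/hreg. Qed.
Let hcont y : 0 < y -> {for y, continuous h}.
Proof. by move/hder/derivable1_diffP/differentiable_continuous. Qed.
Let h1cont y : 0 < y -> {for y, continuous (derive1 h)}.
Proof. by move/h1der/derivable1_diffP/differentiable_continuous. Qed.

Lemma hb0 r : exists C, 0 <= C /\ forall y, 0 <= y <= r -> `|h y| <= C * y.
Proof.
case: Hh => _ _ [d0 d00 [M0 H0]] _ _.
have cf : forall y, 0 < y -> {for y, continuous (fun t => h t / t)}.
  move=> y y0; apply: (@continuousM _ _ h (fun t => t^-1)); first exact: hcont.
  by apply: continuousV; [rewrite gt_eqF | exact: cvg_id].
have [C HC] := @bdd_oc _ _ _ _ r d00 H0 cf.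
exists `|C|; split => // y /andP[y0 yr].
case: (ltrP 0 y) => y0'.
  have := HC y; rewrite y0' yr => /(_ isT) Hy.
  have -> : h y = h y / y * y by rewrite divfK // gt_eqF.
  by rewrite normrM (ger0_norm (ltW y0')); apply: ler_wpM2r; [exact: ltW | exact: le_trans Hy (ler_norm _)].
by rewrite (h0 _ y0') normr0 mulr_ge0.
Qed.

Lemma hb1 r : exists C, 0 <= C /\ forall y, 0 < y <= r -> `|derive1 h y| <= C.
Proof.
case: Hh => _ _ _ [d1 d10 [M1 H1]] _.
have [C HC] := @bdd_oc _ _ _ _ r d10 H1 h1cont.
by exists `|C|; split => // y /HC /le_trans; apply; exact: ler_norm.
Qed.

Lemma hb2 r : exists C, 0 <= C /\ forall y, 0 < y <= r -> `|derive1n 2 h y * y| <= C.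
Proof.
case: Hh => _ _ _ _ [d2 d20 [M2 H2]].
have cf : forall y, 0 < y -> {for y, continuous (fun t => derive1n 2 h t * t)}.
  move=> y y0; apply: (@continuousM _ _ (derive1n 2 h) id); first exact: h2cont.
  exact: cvg_id.
have [C HC] := @bdd_oc _ _ _ _ r d20 H2 cf.
by exists `|C|; split => // y /HC /le_trans; apply; exact: ler_norm.
Qed.


Lemma phi_cases p : phi p = 0 \/ 0 < phi p.
Proof. by rewrite lt_neqAle phi_ge0 andbT; case: eqP => [<-|]; [left|right]. Qed.

Lemma Bnd_k0 r : Bnd (Wr r) (fun t => h (phi t.1.1)) (fun t => phi t.1.1).
Proof.
have [C [C0 HC]] := hb0 r; exists C; split => // t Wt.
by apply: HC; rewrite phi_ge0.
Qed.

Lemma Bnd_k1 r (F g : V * V * V -> R) : Bnd (Wr r) F (fun t => sq t.1.1 * g t) ->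
  Bnd (Wr r) (fun t => derive1 h (phi t.1.1) * F t) (fun t => sq t.1.1 * g t).
Proof.
move=> HF; have [C1 [C10 H1]] := hb1 r; have [CF [CF0 HCF]] := HF.
exists (C1 * CF); split; first exact: mulr_ge0.
move=> t Wt; case: (phi_cases t.1.1) => p0.
  by rewrite (@Bnd_sq0 r F g t HF Wt p0) mulr0 normr0 /sq p0 sqrtr0 mul0r mulr0.
rewrite normrM -mulrA; apply: ler_pM; rewrite ?normr_ge0 //.
  by apply: H1; rewrite p0; exact: Wt.
exact: HCF.
Qed.

Lemma Bnd_k2 r (F g : V * V * V -> R) : (forall t, 0 <= g t) ->
  Bnd (Wr r) F (fun t => phi t.1.1 * g t) ->
  Bnd (Wr r) (fun t => derive1n 2 h (phi t.1.1) * F t) g.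
Proof.
move=> g0 [CF [CF0 HCF]]; have [C2 [C20 H2]] := hb2 r.
exists (C2 * CF); split; first exact: mulr_ge0.
move=> t Wt; case: (phi_cases t.1.1) => p0.
  have : `|F t| <= 0 by rewrite (le_trans (HCF t Wt)) // p0 mul0r mulr0.
  by rewrite normr_le0 => /eqP ->; rewrite mulr0 normr0 mulr_ge0 ?mulr_ge0.
have HF := HCF t Wt.
have Hk := H2 (phi t.1.1); rewrite p0 in Hk; have {}Hk := Hk Wt.
rewrite normrM (le_trans (ler_wpM2l (normr_ge0 _) HF)) //.
have -> : `|derive1n 2 h (phi t.1.1)| * (CF * (phi t.1.1 * g t)) =
  CF * (`|derive1n 2 h (phi t.1.1) * phi t.1.1| * g t).
  by rewrite normrM (gtr0_norm p0); ring.
rewrite [C2 * CF]mulrC -mulrA; apply: ler_wpM2l => //; exact: ler_wpM2r.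
Qed.


Lemma near_phi1 p : phi p = 0 -> \forall q \near p, phi q <= 1.
Proof.
move=> p0; have n2 := @cvgr_lt _ _ (nbhs p) (nbhs_filter p) _ _ (HD_cont (HD_phi p)) 1.
rewrite p0 in n2; have {}n2 := n2 ltr01.
by near=> q; apply: ltW; near: q.
Unshelve. all: by end_near.
Qed.

Lemma HD_hphi p : HD (fun q => h (phi q)) p (fun v => derive1 h (phi p) * Dphi p v).
Proof.
case: (phi_cases p) => p0; last first. have K := HD_comp h (hder _ p0) (HD_phi p). exact: K.
have [C [C0 HC]] := hb0 1.
apply: (HD_extd (df := fun _ => 0)); last by move=> v; rewrite phi0_Dphi // mulr0.
apply: (@HD_zero _ _ _ phi p C).
- by apply: HD_extd (HD_phi p) _ => v; exact: phi0_Dphi.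
- exact: p0.
- by rewrite p0 h0.
- have n1 := near_phi1 _ p0.
  near=> q; have q1 : phi q <= 1 by near: q.
  by rewrite (ger0_norm (phi_ge0 q)); apply: HC; rewrite phi_ge0 q1.
Unshelve. all: by end_near.
Qed.

Lemma HD_Xm p : HD (fun q => h (phi q) * G q) p
  (fun v => derive1 h (phi p) * Dphi p v * G p + h (phi p) * DG p v).
Proof. by apply: HD_extd (HD_mul (HD_hphi p) (HD_G p)) _ => v; ring. Qed.

Definition DT v p w := derive1n 2 h (phi p) * (Dphi p w * (Dphi p v * G p)) +
  derive1 h (phi p) * (D2phi p v w * G p + Dphi p v * DG p w).

Lemma HD_T v p : HD (fun q => derive1 h (phi q) * (Dphi q v * G q)) p (DT v p).
Proof.
case: (phi_cases p) => p0; last first.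
  apply: HD_extd (HD_mul (HD_comp _ (h1der _ p0) (HD_phi p)) (HD_mul (HD_Dphi v p) (HD_G p))) _.
  move=> w; rewrite /DT; change (derive1n 2 h) with (derive1 (derive1 h)); ring.
have [C [C0 HC]] := hb1 1.
apply: (HD_extd (df := fun _ => 0)); last first.
  by move=> w; rewrite /DT !phi0_Dphi // phi0_G //; ring.
apply: (@HD_zero _ _ _ (fun q => Dphi q v * G q) p C).
- apply: HD_extd (HD_mul (HD_Dphi v p) (HD_G p)) _ => w.
  by rewrite phi0_Dphi // phi0_G // !mul0r addr0.
- by rewrite phi0_G // mulr0.
- by rewrite phi0_G // !mulr0.
- have n1 := near_phi1 _ p0.
  near=> q; have q1 : phi q <= 1 by near: q.
  case: (phi_cases q) => q0.
    by rewrite phi0_Dphi // !mul0r mulr0 normr0 mulr0.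
  by rewrite normrM ler_wpM2r //; apply: HC; rewrite q0 q1.
Unshelve. all: by end_near.
Qed.

Definition D2X v p w := DT v p w +
  (derive1 h (phi p) * Dphi p w * DG p v + h (phi p) * D2G p v w).

Lemma dXm_eq v : (fun y => 'd (fun q => h (phi q) * G q) y v) =
  fun y => derive1 h (phi y) * (Dphi y v * G y) + h (phi y) * DG y v.
Proof. rewrite funeqE => y; rewrite (HD_val v (HD_Xm y)); ring. Qed.

Lemma HD_dXm v p : HD (fun y => 'd (fun q => h (phi q) * G q) y v) p (D2X v p).
Proof.
rewrite dXm_eq; apply: HD_extd (HD_add (HD_T v p) (HD_mul (HD_hphi p) (HD_DG v p))) _.
by move=> w; rewrite /D2X; ring.
Qed.


Section HB.
Variable r : R.
Hypothesis Hr : 0 <= r.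
Local Notation W := (Wr r).
Let vv (t : V * V * V) := t.1.2.
Let ww (t : V * V * V) := t.2.

Lemma Ba2 : Bnd W (fun t => derive1 h (phi t.1.1) * Dphi t.1.1 t.1.2)
  (fun t => sq t.1.1 * `|t.1.2|).
Proof. exact: Bnd_k1 (@P1 r Hr vv). Qed.

Lemma Bb1 : Bnd W (fun t => h (phi t.1.1) * G t.1.1) (fun t => phi t.1.1 * sq t.1.1).
Proof. exact: Bnd_mul (Bnd_k0 r) (@P2 r Hr). Qed.

Lemma Bb2 : Bnd W (fun t => derive1 h (phi t.1.1) * (Dphi t.1.1 t.1.2 * G t.1.1) +
    h (phi t.1.1) * DG t.1.1 t.1.2) (fun t => phi t.1.1 * `|t.1.2|).
Proof.
apply: Bnd_add; last exact: Bnd_mul (Bnd_k0 r) (@P3 r Hr vv).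
apply: (Bnd_eqg (g := fun t => sq t.1.1 * (sq t.1.1 * `|t.1.2|)) ).
  by move=> t _; rewrite mulrA -expr2 sqK.
apply: Bnd_k1.
apply: (Bnd_eqg (g := fun t => (sq t.1.1 * `|t.1.2|) * sq t.1.1)).
  by move=> t _; rewrite mulrC.
exact: Bnd_mul (@P1 r Hr vv) (@P2 r Hr).
Qed.

Lemma Bb3 : Bnd W (fun t => D2X t.1.2 t.1.1 t.2)
  (fun t => sq t.1.1 * (`|t.1.2| * `|t.2|)).
Proof.
rewrite /D2X /DT.
have g0 : forall t : V * V * V, 0 <= sq t.1.1 * (`|t.1.2| * `|t.2|).
  by move=> t; rewrite !mulr_ge0 ?sq_ge0.
apply: Bnd_add; first apply: Bnd_add.
- apply: Bnd_k2 => //.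
  apply: (Bnd_eqg (g := fun t => (sq t.1.1 * `|t.2|) * ((sq t.1.1 * `|t.1.2|) * sq t.1.1))).
    by move=> t _; rewrite -sqK; ring.
  exact: Bnd_mul (@P1 r Hr ww) (Bnd_mul (@P1 r Hr vv) (@P2 r Hr)).
- apply: Bnd_k1; apply: Bnd_add.
    apply: (Bnd_eqg (g := fun t => (`|t.1.2| * `|t.2|) * sq t.1.1)).
      by move=> t _; rewrite mulrC.
    exact: Bnd_mul (@P5 r Hr vv ww) (@P2 r Hr).
  apply: (Bnd_eqg (g := fun t => (sq t.1.1 * `|t.1.2|) * `|t.2|)).
    by move=> t _; rewrite mulrA.
  exact: Bnd_mul (@P1 r Hr vv) (@P3 r Hr ww).
- apply: Bnd_add.
    apply: (Bnd_eqg (g := fun t => (sq t.1.1 * `|t.2|) * `|t.1.2|)).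
      by move=> t _; ring.
    exact: Bnd_mul (@Bnd_k1 r _ _ (@P1 r Hr ww)) (@P3 r Hr vv).
  apply: (Bnd_le (K := 1 + r)); [by apply: addr_ge0 | move=> t Wt /= |
    exact: Bnd_mul (Bnd_k0 r) (@P4 r Hr vv ww)].
  cbv beta; rewrite /vv /ww -sqK expr2.
  apply: (le_trans (y := ((1 + r) * sq t.1.1) * (`|t.1.2| * `|t.2|))); last by rewrite -mulrA.
  apply: ler_wpM2r; first by rewrite mulr_ge0.
  by rewrite ler_wpM2r ?sq_ge0 //; exact: (@sq_le r t Wt).
Qed.
End HB.


Lemma Cp1 (a C y : R) : 0 <= y -> `|a| <= C * y -> `|a| <= (C + 1) * y.
Proof. by move=> y0 H; apply: (le_trans H); rewrite ler_wpM2r // lerDl. Qed.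

Lemma to_fun (f b : V -> R) r : (forall p, 0 <= b p) ->
  Bnd (Wr r) (fun t => f t.1.1) (fun t => b t.1.1) ->
  fun_bdd_mult f b [set p | phi p <= r].
Proof.
move=> b0 [C [C0 H]]; exists (C + 1); first by rewrite ltr_wpDl.
by move=> x Wx; apply: Cp1 => //; exact: (H (x, x, x) Wx).
Qed.

Lemma to_diff (f b : V -> R) r (F : V -> V -> R) : (forall p, 0 <= b p) ->
  (forall x v, 'd f x v = F x v) ->
  Bnd (Wr r) (fun t => F t.1.1 t.1.2) (fun t => b t.1.1 * `|t.1.2|) ->
  diff_bdd_mult f b [set p | phi p <= r].
Proof.
move=> b0 HF [C [C0 H]]; exists (C + 1); first by rewrite ltr_wpDl.
move=> x Wx v; rewrite HF -mulrA; apply: Cp1; first by rewrite mulr_ge0.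
exact: (H (x, v, v) Wx).
Qed.

Lemma to_D2 (f b : V -> R) r (F : V -> V -> V -> R) : (forall p, 0 <= b p) ->
  (forall x v w, D2 f x v w = F x v w) ->
  Bnd (Wr r) (fun t => F t.1.1 t.1.2 t.2) (fun t => b t.1.1 * (`|t.1.2| * `|t.2|)) ->
  D2_bdd_mult f b [set p | phi p <= r].
Proof.
move=> b0 HF [C [C0 H]]; exists (C + 1); first by rewrite ltr_wpDl.
move=> x Wx v w; rewrite HF -!mulrA; apply: Cp1; first by rewrite !mulr_ge0.
exact: (H (x, v, w) Wx).
Qed.

Lemma contD {f g : V -> R} {x} : {for x, continuous f} -> {for x, continuous g} ->
  {for x, continuous (fun y => f y + g y)}.
Proof. exact: continuousD. Qed.
Lemma contM {f g : V -> R} {x} : {for x, continuous f} -> {for x, continuous g} ->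
  {for x, continuous (fun y => f y * g y)}.
Proof. exact: continuousM. Qed.
Lemma contC {k : R -> R} {x} : {for phi x, continuous k} -> {for x, continuous (fun y => k (phi y))}.
Proof. by move=> kc; apply: (@continuous_comp _ _ _ phi k); [exact: HD_cont (HD_phi x)|]. Qed.

Lemma HDex_D2phi v w x : exists df, HD (fun p => D2phi p v w) x df.
Proof.
eexists; rewrite /D2phi; apply: HD_scal; apply: HD_sum => j _; apply: HD_add.
  by apply: HD_mul; exact: HD_Sv.
by apply: HD_mul; [exact: HD_ee | exact: HD_cst].
Qed.

Lemma HDex_D2G v w x : exists df, HD (fun p => D2G p v w) x df.
Proof.
eexists; rewrite /D2G; apply: HD_scal; apply: HD_sum => a _; apply: HD_sum => c _.
apply: HD_add; first apply: HD_add.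
- by apply: HD_mul; [exact: HD_cst | exact: HD_Sv].
- by apply: HD_mul; [exact: HD_Sv | exact: HD_cst].
- by apply: HD_mul; [exact: HD_Sv | exact: HD_cst].
Qed.

Lemma main_sec r : 0 < r ->
  (C1 (h \o phi) /\
   fun_bdd_mult (h \o phi) phi [set p | phi p <= r] /\
   diff_bdd_mult (h \o phi) (fun p => phi p `^ 2^-1) [set p | phi p <= r]) /\
  (C2 (fun q => h (phi q) * G q) /\
   fun_bdd_mult (fun q => h (phi q) * G q) (fun p => phi p `^ (3 / 2)) [set p | phi p <= r] /\
   diff_bdd_mult (fun q => h (phi q) * G q) phi [set p | phi p <= r] /\
   D2_bdd_mult (fun q => h (phi q) * G q) (fun p => phi p `^ 2^-1) [set p | phi p <= r]).
Proof.
move=> r0; have Hr := ltW r0.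
have E12 p : phi p `^ 2^-1 = sq p by rewrite powR12_sqrt // phi_ge0.
have E32 p : phi p `^ (3 / 2) = phi p * sq p.
  have -> : (3 / 2 : R) = 1 + 2^-1 by field.
  rewrite powRD; first by rewrite powRr1 ?phi_ge0 // E12.
  apply/implyP => /eqP H; exfalso; have : (0 : R) < 1 + 2^-1 by [].
  by rewrite H ltxx.
have dhphi x v : 'd (h \o phi) x v = derive1 h (phi x) * Dphi x v.
  exact: (HD_val v (HD_hphi x)).
have dXm x v : 'd (fun q => h (phi q) * G q) x v =
    derive1 h (phi x) * (Dphi x v * G x) + h (phi x) * DG x v.
  by rewrite (HD_val v (HD_Xm x)); ring.
have d2Xm x v w : D2 (fun q => h (phi q) * G q) x v w = D2X v x w.
  exact: (HD_val w (HD_dXm v x)).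
split; [split; [|split] | split; [|split; [|split]]].
- split; first by move=> x; exact: HD_diff (HD_hphi x).
  move=> v; have -> : (fun x => 'd (h \o phi) x v) = fun x => derive1 h (phi x) * Dphi x v.
    by apply/funext => x; exact: dhphi.
  move=> x; case: (phi_cases x) => p0.
    have [C [C0 HC]] := @Ba2 1 ler01.
    apply: (@cont0 _ x (C * `|v|)) => //; first by rewrite phi0_Dphi // mulr0.
    move=> y y1; have -> : C * `|v| * sq y = C * (sq y * `|v|) by ring.
    exact: (HC (y, v, v) y1).
  have K1 : {for x, continuous (fun y => derive1 h (phi y))} by apply: contC; exact: h1cont.
  have K2 := HD_cont (HD_Dphi v x).
  have K3 := contM K1 K2. exact: K3.
- by apply: to_fun; [exact: phi_ge0 | exact: Bnd_k0].
- apply: (@to_diff _ _ r (fun x v => derive1 h (phi x) * Dphi x v)) => //.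
    by move=> p; rewrite powR_ge0.
  apply: (Bnd_eqg _ (@Ba2 r Hr)) => t _; by rewrite E12.
- split; first by move=> x; exact: HD_diff (HD_Xm x).
  split; first by move=> v x; exact: HD_diff (HD_dXm v x).
  move=> v w; have -> : (fun x => D2 (fun q => h (phi q) * G q) x v w) = fun x => D2X v x w.
    by apply/funext => x; exact: d2Xm.
  move=> x; case: (phi_cases x) => p0.
    have [C [C0 HC]] := @Bb3 1 ler01.
    apply: (@cont0 _ x (C * (`|v| * `|w|))) => //.
      rewrite /D2X /DT !phi0_Dphi // phi0_G // p0 h0 //; ring.
    move=> y y1; have -> : C * (`|v| * `|w|) * sq y = C * (sq y * (`|v| * `|w|)) by ring.
    exact: (HC (y, v, w) y1).
  have [d1 Hd1] := HDex_D2phi v w x; have [d2 Hd2] := HDex_D2G v w x.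
  rewrite /D2X /DT.
  apply: contD; first apply: contD.
  + apply: contM; first by apply: contC; exact: h2cont.
    apply: contM; first exact: HD_cont (HD_Dphi w x).
    apply: contM; [exact: HD_cont (HD_Dphi v x) | exact: HD_cont (HD_G x)].
  + apply: contM; first by apply: contC; exact: h1cont.
    apply: contD; (apply: contM; last exact: HD_cont (HD_G x)) || apply: contM.
    * exact: HD_cont Hd1.
    * exact: HD_cont (HD_Dphi v x).
    * exact: HD_cont (HD_DG w x).
  + apply: contD.
      apply: contM; last exact: HD_cont (HD_DG v x).
      by apply: contM; [apply: contC; exact: h1cont | exact: HD_cont (HD_Dphi w x)].
    by apply: contM; [apply: contC; exact: hcont | exact: HD_cont Hd2].
- apply: to_fun => [p|]; first by rewrite powR_ge0.
  by apply: (Bnd_eqg _ (@Bb1 r Hr)) => t _; rewrite E32.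
- apply: (@to_diff _ _ r (fun x v => derive1 h (phi x) * (Dphi x v * G x) + h (phi x) * DG x v)) => //.
    exact: phi_ge0.
  exact: (@Bb2 r Hr).
- apply: (@to_D2 _ _ r (fun x v w => D2X v x w)) => //.
    by move=> p; rewrite powR_ge0.
  by apply: (Bnd_eqg _ (@Bb3 r Hr)) => t _; rewrite E12.
Qed.

End H.

End Concrete.

Theorem lemma5p1 (R : realType) (N n : nat)
  (E : rel 'I_N) (d : 'I_N -> 'I_N -> R)
  (b : 'I_N -> 'I_n -> 'rV[R]_n) (h1 h2 : R -> R)
  (HEsym : symmetric E) (HEirr : irreflexive E)
  (HEne : exists i j, E i j)
  (Hdsym : forall i j, d i j = d j i)
  (Hdge0 : forall i j, E i j -> 0 <= d i j)
  (Hb : forall i k k', \sum_(l < n) b i k 0 l * b i k' 0 l = (k == k')%:R)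
  (Hh1 : h_hyp h1) (Hh2 : h_hyp h2) (Hh12 : h_hyp6 h1 h2)
  (i : 'I_N) (k : 'I_n) (nu : 'I_2) (r : R) (Hr : 0 < r) :
  let h := if nu == ord0 then h1 else h2 in
  let psii := psi_i E d i in
  let W := [set p : 'M[R]_(N, n) | psii p <= r] in
  let Xm := Xpsi E d h i (b i k) in
  (C1 (h \o psii) /\
   fun_bdd_mult (h \o psii) psii W /\
   diff_bdd_mult (h \o psii) (fun p => psii p `^ 2^-1) W) /\
  (C2 Xm /\
   fun_bdd_mult Xm (fun p => psii p `^ (3 / 2)) W /\
   diff_bdd_mult Xm psii W /\
   D2_bdd_mult Xm (fun p => psii p `^ 2^-1) W).
Proof.
move=> h psii W Xm.
have Hh : h_hyp h by rewrite /h; case: (nu == ord0).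
pose B := Bfield i (b i k).
have HB : forall a l, a != i -> B a l = 0.
  by move=> a l ai; rewrite /B /Bfield mxE (negbTE ai).
have EX : Xm = fun q => h (@phi R N n E d i q) * @G R N n E d B q.
  rewrite /Xm /Xpsi; apply/funext => q.
  rewrite linearZ /= (HD_val _ (@HD_psi R N n E d q)).
  done.
rewrite EX.
exact: (@main_sec R N n E d i B HEsym Hdsym HB h Hh r Hr).
Qed.
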